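(* Let $G$ be an $\alpha_i$-metric graph ($i\ge 0$ an integer). Then for every vertex $v\in V\setminus C(G)$, $loc(v)\le i+1$.
   Context: All graphs $G=(V,E)$ are finite, connected, unweighted, undirected, simple; $d(u,v)$ is the shortest-path distance. $I(u,v)=\{x: d(u,x)+d(x,v)=d(u,v)\}$. A graph is $\alpha_i$-metric if for all vertices $u,v,w,x$: whenever $v\in I(u,w)$, $w\in I(v,x)$ and $v,w$ are adjacent, then $d(u,x)\ge d(u,v)+d(v,x)-i$. $e(v)=\max_u d(u,v)$, $rad(G)=\min_v e(v)$, $C(G)=\{v:e(v)=rad(G)\}$. For $v\notin C(G)$, the locality is $loc(v)=\min\{d(v,x): x\in V,\ e(x)<e(v)\}$. *)

(* Defs.v *)
From mathcomp Require Import all_boot.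
Set Implicit Arguments. Unset Strict Implicit. Unset Printing Implicit Defensive.

Definition simple_graph (T : finType) (e : rel T) : Prop :=
  symmetric e /\ irreflexive e.

Definition connected_graph (T : finType) (e : rel T) : Prop :=
  forall x y : T, connect e x y.

Fixpoint ball (T : finType) (e : rel T) (x : T) (n : nat) : {set T} :=
  match n with
  | 0 => [set x]
  | n'.+1 => ball e x n' :|: [set z | [exists w in ball e x n', e w z]]
  end.

(* shortest-path distance: least n < #|T| with y in ball x n
   (for connected graphs such n exists) *)
Definition dist (T : finType) (e : rel T) (x y : T) : nat :=
  find (fun n => y \in ball e x n) (iota 0 #|T|).

Definition interval (T : finType) (e : rel T) (u v : T) : {set T} :=
  [set x | dist e u x + dist e x v == dist e u v].

Definition alpha_metric (T : finType) (e : rel T) (i : nat) : Prop :=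
  forall u v w x : T,
    v \in interval e u w -> w \in interval e v x -> e v w ->
    dist e u v + dist e v x <= dist e u x + i.

Definition ecc (T : finType) (e : rel T) (v : T) : nat :=
  \max_(u : T) dist e u v.

(* rad(G); the default v0 only serves as neutral start and does not affect the value *)
Definition rad (T : finType) (e : rel T) (v0 : T) : nat :=
  \big[minn/ecc e v0]_(w : T) ecc e w.

Definition center (T : finType) (e : rel T) : {set T} :=
  [set v | ecc e v == rad e v].

(* locality; #|T| is a default that is never used when v is not central *)
Definition loc (T : finType) (e : rel T) (v : T) : nat :=
  \big[minn/#|T|]_(x | ecc e x < ecc e v) dist e v x.

(* Main.v *)
Require Import Defs.
From mathcomp Require Import all_boot.
From mathcomp Require Import zify.
Set Implicit Arguments. Unset Strict Implicit.

Section Dist.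
Variables (T : finType) (e : rel T).
Hypothesis sym : symmetric e.
Hypothesis irr : irreflexive e.
Hypothesis conn : connected_graph e.

Lemma ball_mono x n m : n <= m -> ball e x n \subset ball e x m.
Proof.
elim: m => [|m IH]; first by rewrite leqn0 => /eqP ->.
rewrite leq_eqVlt => /orP [/eqP -> //| H].
apply: subset_trans (IH H) _ => /=; exact: subsetUl.
Qed.

Lemma ball_path x n y :
  y \in ball e x n <-> exists p, [/\ path e x p, last x p = y & size p <= n].
Proof.
split.
  elim: n y => [|n IH] y /=.
    by rewrite in_set1 => /eqP ->; exists [::].
  rewrite in_setU => /orP [/IH [p [P1 P2 P3]] | ].
    by exists p; split => //; apply: leqW.
  rewrite inE => /existsP [w /andP [/IH [p [P1 P2 P3]] ew]].
  exists (rcons p y); split.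
  - by rewrite rcons_path P1 P2.
  - by rewrite last_rcons.
  - by rewrite size_rcons.
case=> p [P1 P2 P3].
suff H : y \in ball e x (size p) by move: H; apply/subsetP; apply: ball_mono.
rewrite -P2; move: P1 {P2 P3}.
elim/last_ind: p => [|p z IH]; first by rewrite /= in_set1.
rewrite rcons_path last_rcons size_rcons => /andP [P1 ez] /=.
rewrite in_setU; apply/orP; right; rewrite inE; apply/existsP.
by exists (last x p); rewrite IH.
Qed.

Lemma ball_sym x y n : y \in ball e x n -> x \in ball e y n.
Proof.
move/ball_path => [p [P1 P2 P3]]; apply/ball_path.
case: p P1 P2 P3 => [|a p] P1 P2 P3.
  by exists [::]; rewrite /= -P2.
exists (rev (belast x (a :: p))); split.
- rewrite -P2 rev_path.
  by rewrite (@eq_path _ _ e) // => z w; rewrite /= sym.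
- by rewrite /= rev_cons last_rcons.
- by rewrite size_rev size_belast.
Qed.

Lemma ball_conn x y : exists2 n, n < #|T| & y \in ball e x n.
Proof.
have /connectP [p P1 P2] := conn x y.
case: (shortenP P1) P2 => p' P1' U _ P2.
exists (size p'); last by apply/ball_path; exists p'.
move/card_uniqP: U => /= U.
have := max_card (mem (x :: p')); rewrite U /=.
done.
Qed.

Lemma dist_ball x y : y \in ball e x (dist e x y).
Proof.
have [n Hn Hb] := ball_conn x y.
have hs : has (fun n => y \in ball e x n) (iota 0 #|T|).
  by apply/hasP; exists n => //; rewrite mem_iota.
have := nth_find 0 hs.
have hl : find (fun n => y \in ball e x n) (iota 0 #|T|) < #|T|.
  by rewrite -[X in _ < X](size_iota 0) -has_find.
by rewrite nth_iota ?add0n.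
Qed.

Lemma dist_lt x y : dist e x y < #|T|.
Proof.
have [n Hn Hb] := ball_conn x y.
have hs : has (fun n => y \in ball e x n) (iota 0 #|T|).
  by apply/hasP; exists n => //; rewrite mem_iota.
by rewrite /dist -[X in _ < X](size_iota 0) -has_find.
Qed.

Lemma dist_le x y n : y \in ball e x n -> dist e x y <= n.
Proof.
move=> H; case: (leqP #|T| n) => Hn.
  by apply: ltnW; apply: leq_trans (dist_lt x y) Hn.
rewrite leqNgt; apply/negP => Hlt.
have := before_find 0 Hlt; rewrite nth_iota ?size_iota // add0n H.
done.
Qed.

Lemma dist_sym x y : dist e x y = dist e y x.
Proof.
by apply/eqP; rewrite eqn_leq !dist_le // ball_sym // dist_ball.
Qed.

Lemma dist_edge u y z : e y z -> dist e u z <= (dist e u y).+1.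
Proof.
move=> eyz; apply: dist_le => /=; rewrite in_setU; apply/orP; right.
by rewrite inE; apply/existsP; exists y; rewrite dist_ball.
Qed.

Lemma dist_adj x y : e x y -> dist e x y = 1.
Proof.
move=> exy; apply/eqP; rewrite eqn_leq; apply/andP; split.
  have := dist_edge x exy; have -> : dist e x x = 0.
    by apply/eqP; rewrite -leqn0; apply: dist_le; rewrite /= in_set1.
  done.
rewrite lt0n; apply/negP => /eqP H.
have := dist_ball x y; rewrite H /= in_set1 => /eqP Hy.
by move: exy; rewrite Hy irr.
Qed.

Lemma dist_pred v x l : dist e v x = l.+1 ->
  exists y, e y x /\ dist e v y = l.
Proof.
move=> H; have := dist_ball v x; rewrite H /= in_setU => /orP [Hb|].
  by have := dist_le Hb; rewrite H ltnn.
rewrite inE => /existsP [w /andP [Hw ew]]; exists w; split => //.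
have h1 := dist_le Hw; have h2 := dist_edge v ew; lia.
Qed.

Lemma dist_ecc u v : dist e u v <= ecc e v.
Proof. by rewrite /ecc; apply: (@leq_bigmax _ (fun u => dist e u v) u). Qed.

Lemma ecc_attained v : exists u, dist e u v = ecc e v.
Proof.
have h : 0 < #|T| by apply/card_gt0P; exists v.
by have [u Hu] := eq_bigmax (fun u => dist e u v) h; exists u; rewrite /ecc Hu.
Qed.

End Dist.

Lemma bigmin_le (I : finType) (P : pred I) (F : I -> nat) d x :
  P x -> \big[minn/d]_(i | P i) F i <= F x.
Proof.
move=> Px; have : x \in index_enum I by rewrite mem_index_enum.
elim: (index_enum I) => [|a r IH] //; rewrite inE big_cons => /orP [/eqP <-|xr].
  by rewrite Px geq_minl.
case: (P a); last exact: IH.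
exact: leq_trans (geq_minr _ _) (IH xr).
Qed.

Theorem lemma7 (T : finType) (e : rel T) (i : nat) :
  simple_graph e -> connected_graph e -> alpha_metric e i ->
  forall v : T, v \notin center e -> loc e v <= i.+1.
Proof.
move=> [sym irr] conn alpha v vnc.
have [w0 Hw0] : exists w, ecc e w < ecc e v.
  apply/existsP; apply: contraR vnc => /existsPn Hall.
  rewrite inE eqn_leq; apply/andP; split.
    apply: (big_ind (fun n => ecc e v <= n)) => //.
      by move=> a b ha hb; rewrite leq_min ha hb.
    by move=> w _; move: (Hall w); rewrite -leqNgt.
  apply: (big_rec (fun n => n <= ecc e v)) => // w a _ h.
  exact: leq_trans (geq_minr _ _) h.
case: (@arg_minnP _ w0 (fun x => ecc e x < ecc e v) (fun x => dist e v x) Hw0) => x Hx Hmin.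
apply: leq_trans (_ : dist e v x <= i.+1).
  by rewrite /loc; apply: bigmin_le.
rewrite leqNgt; apply/negP => Hl.
have [l Hl'] : exists l, dist e v x = l.+1 by exists (dist e v x).-1; lia.
have [y [eyx Hy]] := dist_pred conn Hl'.
have Hey : ecc e v <= ecc e y.
  rewrite leqNgt; apply/negP => H; have := Hmin y H; lia.
have Hexy : ecc e y <= (ecc e x).+1.
  have [u Hu] := ecc_attained e y.
  rewrite -Hu; apply: leq_trans (@dist_edge _ e conn u x y _) _.
    by rewrite sym; exact: eyx.
  by rewrite ltnS; apply: dist_ecc.
have [u Hu] := ecc_attained e y.
have Hux : dist e u y <= (dist e u x).+1 by apply: dist_edge => //; rewrite sym.
have Hux2 := @dist_ecc _ e u x.
have Huv := @dist_ecc _ e u v.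
have exy : e x y by rewrite sym.
have dxy := dist_adj irr conn exy.
have := alpha u x y v.
rewrite !inE dxy (dist_sym sym conn y v) (dist_sym sym conn x v) Hy Hl' exy.
have -> : dist e u x + 1 == dist e u y by apply/eqP; lia.
have -> : 1 + l == l.+1 by rewrite add1n.
move=> /(_ isT isT isT); lia.
Qed.
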